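(* Let $G$ be a finite simple graph, let $P$ be a pebble distribution on $G$, and let $U$ be a unit distribution of nonzero size with all pebbles on a vertex $u$, with $P$ and $U$ disjoint. Then every cooperation vertex (with respect to $P$ and $U$) has a neighbor that has cooperation excess.
   Context: A pebble distribution is a function $V(G)\to\mathbb{Z}_{\geq0}$; $(P+U)(v)=P(v)+U(v)$; disjoint means no vertex has pebbles under both. A pebbling move removes two pebbles from a vertex and adds one to an adjacent vertex. A vertex $v$ is $k$-reachable under $P$ if some executable sequence of pebbling moves yields at least $k$ pebbles on $v$; reachable means $1$-reachable. $\mathrm{reach}(P,v)$ is the largest such $k$; $\mathrm{exc}(P,v)=\mathrm{reach}(P,v)-1$ if $v$ is reachable, else $0$. A cooperation vertex is a vertex reachable under $P+U$ but reachable under neither $P$ nor $U$. The cooperation excess of a vertex $v$ is $\mathrm{exc}(P+U,v)-\mathrm{exc}(P,v)-\mathrm{exc}(U,v)$; $v$ has cooperation excess if this is positive. *)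

(* Defs.v *)
From mathcomp Require Import all_boot.
From mathcomp Require Import boolp.
Set Implicit Arguments. Unset Strict Implicit. Unset Printing Implicit Defensive.

Section Pebbling.
Variables (T : finType) (e : rel T).

Definition dist := T -> nat.

Definition dadd (P U : dist) : dist := fun v => P v + U v.

Definition disjoint_dist (P U : dist) : Prop := forall v, P v = 0 \/ U v = 0.

Definition total (P : dist) : nat := \sum_(v : T) P v.

Definition pmove (D D' : dist) : Prop :=
  exists x y, [/\ e x y, 2 <= D x &
    forall z, D' z = if z == x then D x - 2 else if z == y then D y + 1 else D z].

Inductive preach (D : dist) : dist -> Prop :=
| preach_refl : preach D D
| preach_step : forall D1 D2, preach D D1 -> pmove D1 D2 -> preach D D2.

Definition kreachable (P : dist) (v : T) (k : nat) : Prop :=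
  exists D, preach P D /\ k <= D v.

Definition reachable (P : dist) (v : T) : Prop := kreachable P v 1.

Definition reach (P : dist) (v : T) : nat :=
  \max_(k < (total P).+1 | `[< kreachable P v k >]) k.

Definition exc (P : dist) (v : T) : nat :=
  if `[< reachable P v >] then (reach P v).-1 else 0.

Definition cooperation_vertex (P U : dist) (v : T) : Prop :=
  reachable (dadd P U) v /\ ~ reachable P v /\ ~ reachable U v.

(* exc(P+U,v) - exc(P,v) - exc(U,v) > 0, computed in the integers;
   equivalent to the strict inequality below in nat. *)
Definition has_coop_excess (P U : dist) (v : T) : Prop :=
  exc P v + exc U v < exc (dadd P U) v.

End Pebbling.

(* Main.v *)
Require Import Defs.
From mathcomp Require Import all_boot.
From mathcomp Require Import boolp.
From mathcomp Require Import zify.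

Set Implicit Arguments. Unset Strict Implicit.
Section Aux.
Variables (T : finType) (e : rel T) (e_irr : irreflexive e).

Lemma sum_ind (x : T) (c : nat) : \sum_(z : T) ((z == x) * c) = c.
Proof.
rewrite (bigD1 x) //= eqxx big1 ?addn0 ?mul1n // => z /negbTE ->; by [].
Qed.

Lemma pmove_total D1 D2 : pmove e D1 D2 -> Defs.total D2 <= Defs.total D1.
Proof.
case=> x [y [Hxy H2 HD]].
have xy : x != y by apply/eqP => E; rewrite E e_irr in Hxy.
have pt : forall z, D2 z + (z == x) * 2 = D1 z + (z == y) * 1.
  move=> z; rewrite HD; case: (eqVneq z x) => [->|zx].
    by rewrite (negbTE xy) /=; lia.
  case: (eqVneq z y) => [->|zy] /=; lia.
have : \sum_z (D2 z + (z == x) * 2) = \sum_z (D1 z + (z == y) * 1).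
  by apply: eq_bigr => z _; apply: pt.
rewrite !big_split /= !sum_ind /Defs.total; lia.
Qed.

Lemma preach_total P D : preach e P D -> Defs.total D <= Defs.total P.
Proof.
elim=> [|D1 D2 _ IH Hm]; first by [].
exact: leq_trans (pmove_total Hm) IH.
Qed.

Lemma le_total (D : dist T) w : D w <= Defs.total D.
Proof.
rewrite /Defs.total (bigD1 w) //=; exact: leq_addr.
Qed.

Lemma kreach2 Q w v : e w v -> kreachable e Q w 2 -> reachable e Q v.
Proof.
move=> Hwv [D [HD H2]].
have wv : w != v by apply/eqP => E; rewrite E e_irr in Hwv.
exists (fun z => if z == w then D w - 2 else if z == v then D v + 1 else D z).
split; last by rewrite eq_sym (negbTE wv) eqxx addn1.
apply: preach_step HD _; exists w, v; split => //.
Qed.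

Lemma first_entry Q D v : Q v = 0 -> preach e Q D -> 1 <= D v ->
  exists w, e w v /\ kreachable e Q w 2.
Proof.
move=> Q0; elim=> [|D1 D2 HD1 IH [x [y [Hxy H2 HD]]]]; first by rewrite Q0.
case: (leqP 1 (D1 v)) => [/IH //|Hv].
rewrite HD; case: (eqVneq v x) => [E|vx].
  by move: Hv; rewrite -E; lia.
case: (eqVneq v y) => [E|vy] H1; last by move: Hv H1; lia.
by exists x; split; [rewrite E | exists D1].
Qed.

Lemma exc0 Q w v : e w v -> ~ reachable e Q v -> exc e Q w = 0.
Proof.
move=> Hwv HnR; rewrite /exc; case: asboolP => // _.
suff : reach e Q w <= 1 by case: (reach e Q w) => [|[|]].
rewrite /reach; apply/bigmax_leqP => k /asboolP [D [HD Hk]].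
rewrite leqNgt; apply/negP => k2; apply: HnR; apply: (kreach2 Hwv).
exists D; split => //; exact: leq_trans k2 Hk.
Qed.

Lemma exc_pos Q w : kreachable e Q w 2 -> 0 < exc e Q w.
Proof.
move=> [D [HD H2]]; rewrite /exc; case: asboolP => [_|HnR]; last first.
  by exfalso; apply: HnR; exists D; split => //; exact: leq_trans H2.
have Ht : 2 < (Defs.total Q).+1.
  by rewrite ltnS; apply: leq_trans H2 (leq_trans (le_total D w) (preach_total HD)).
have : nat_of_ord (Ordinal Ht) <= reach e Q w.
  rewrite /reach; apply: (leq_bigmax_cond (Ordinal Ht)) => /=.
  by apply/asboolP; exists D.
by rewrite /=; case: (reach e Q w) => [|[|]].
Qed.

End Aux.
Unset Implicit Arguments.

Theorem claim3p4 (T : finType) (e : rel T)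
  (e_sym : symmetric e) (e_irr : irreflexive e)
  (P : T -> nat) (u : T) (t : nat) (t_pos : 0 < t) :
  let U : T -> nat := fun x => if x == u then t else 0 in
  disjoint_dist P U ->
  forall v : T, cooperation_vertex e P U v ->
  exists w : T, e v w /\ has_coop_excess e P U w.
Proof.
move=> U _ v [[D [HD Hv]] [HP HU]].
have Q0 : dadd P U v = 0.
  rewrite /dadd; case: (posnP (P v)) => [->|Pp].
    case: (posnP (U v)) => [->//|Up].
    by exfalso; apply: HU; exists U; split => //; constructor.
  by exfalso; apply: HP; exists P; split => //; constructor.
have [w [Hwv H2]] := @first_entry _ e _ _ _ Q0 HD Hv.
exists w; split; first by rewrite e_sym.
rewrite /has_coop_excess (exc0 e_irr Hwv HP) (exc0 e_irr Hwv HU).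
rewrite add0n; exact: (exc_pos e_irr H2).
Qed.
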